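(* Let $ABC$ be a triangle and let $P$ be a point. Let $H_A, H_B, H_C$ be the orthocenters of the triangles $BPC$, $CPA$, $PAB$ respectively, and let $\triangle_A, \triangle_B, \triangle_C$ denote the triangles $AH_BH_C$, $BH_CH_A$, $CH_AH_B$ respectively. Let $\mathcal{H}_P$ be the rectangular hyperbola circumscribed about $ABC$ and passing through $P$. Then the circumcircles of $\triangle_A, \triangle_B, \triangle_C$ pass through a common point, and this point lies on $\mathcal{H}_P$.
   Context: A rectangular hyperbola is a hyperbola whose asymptotes are perpendicular. All triangles involved are assumed nondegenerate. *)

(* Defs.v *)
From mathcomp Require Import all_boot all_order all_algebra.
Set Implicit Arguments. Unset Strict Implicit. Unset Printing Implicit Defensive.
Import Order.TTheory GRing.Theory Num.Theory.
Local Open Scope ring_scope.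

Section Geom.
Variable R : realFieldType.
Definition point := (R * R)%type.

Definition dot (u v : point) : R := u.1 * v.1 + u.2 * v.2.
Definition vsub (u v : point) : point := (u.1 - v.1, u.2 - v.2).
Definition sqdist (u v : point) : R := dot (vsub u v) (vsub u v).

(* oriented area (twice): nonzero iff X, Y, Z are not collinear *)
Definition cross3 (X Y Z : point) : R :=
  (Y.1 - X.1) * (Z.2 - X.2) - (Y.2 - X.2) * (Z.1 - X.1).
Definition nondeg_triangle (X Y Z : point) : Prop := cross3 X Y Z != 0.

(* H is the orthocenter of triangle XYZ: XH ⟂ YZ and YH ⟂ ZX
   (unique for a nondeg_triangle triangle; then ZH ⟂ XY follows). *)
Definition is_orthocenter (H X Y Z : point) : Prop :=
  dot (vsub H X) (vsub Y Z) = 0 /\ dot (vsub H Y) (vsub Z X) = 0.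

Definition on_circumcircle (X Y Z Q : point) : Prop :=
  exists O : point, sqdist O X = sqdist O Y /\ sqdist O X = sqdist O Z
                    /\ sqdist O X = sqdist O Q.

Record conic := Conic { ca : R; cb : R; cc : R; cd : R; ce : R; cf : R }.

Definition on_conic (K : conic) (X : point) : Prop :=
  ca K * X.1 ^+ 2 + cb K * X.1 * X.2 + cc K * X.2 ^+ 2
  + cd K * X.1 + ce K * X.2 + cf K = 0.

(* determinant of the symmetric matrix [[2a, b, d], [b, 2c, e], [d, e, 2f]]
   (8 times the usual conic discriminant); nonzero iff the conic is nondeg_triangle *)
Definition conic_det (K : conic) : R :=
  let a := ca K in let b := cb K in let c := cc K in
  let d := cd K in let e := ce K in let f := cf K in
  (2 * a) * ((2 * c) * (2 * f) - e * e)
  - b * (b * (2 * f) - e * d)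
  + d * (b * e - (2 * c) * d).

(* A rectangular hyperbola: a nondeg_triangle conic whose asymptotic directions
   are perpendicular, i.e. a + c = 0 (then b^2 - 4ac = b^2 + 4a^2 > 0,
   so it is a genuine hyperbola). *)
Definition rect_hyperbola (K : conic) : Prop :=
  ca K + cc K = 0 /\ conic_det K != 0.
End Geom.

(* Main.v *)
Require Import Defs.
From mathcomp Require Import all_boot all_order all_algebra.
From mathcomp Require Import ring lra.
Import Order.TTheory GRing.Theory Num.Theory.
Local Open Scope ring_scope.
Set Implicit Arguments. Unset Strict Implicit.

Section S.
Variable R : realFieldType.
Implicit Types X Y W H Z : point R.

Definition orthF (X Y W : point R) : point R :=
  let u := vsub Y W in let v := vsub W X in
  let r1 := dot X u in let r2 := dot Y v in let D := cross3 X Y W in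
  ((r1 * v.2 - u.2 * r2) / D, (u.1 * r2 - r1 * v.1) / D).

Lemma orthF_spec X Y W : cross3 X Y W != 0 -> is_orthocenter (orthF X Y W) X Y W.
Proof.
case: X => x1 x2; case: Y => y1 y2; case: W => w1 w2 => /= hD.
rewrite /is_orthocenter /orthF /= /dot /vsub /=.
move: hD; rewrite /cross3 /= => hD.
split.

all: field => //.

Qed.

Lemma orth_uniq H H' X Y W : is_orthocenter H X Y W -> is_orthocenter H' X Y W ->
  cross3 X Y W != 0 -> H = H'.
Proof.
case: X => x1 x2; case: Y => y1 y2; case: W => w1 w2; case: H => h1 h2; case: H' => k1 k2.
rewrite /is_orthocenter /dot /vsub /cross3 /= => [[e1 e2]] [f1 f2] hD.
have E1 : (h1 - k1) * ((y1 - x1) * (w2 - x2) - (y2 - x2) * (w1 - x1)) =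
   (w2 - x2) * (((h1 - x1) * (y1 - w1) + (h2 - x2) * (y2 - w2)) - ((k1 - x1) * (y1 - w1) + (k2 - x2) * (y2 - w2)))
   - (y2 - w2) * (((h1 - y1) * (w1 - x1) + (h2 - y2) * (w2 - x2)) - ((k1 - y1) * (w1 - x1) + (k2 - y2) * (w2 - x2))).
  by ring.
have E2 : (h2 - k2) * ((y1 - x1) * (w2 - x2) - (y2 - x2) * (w1 - x1)) =
   - (w1 - x1) * (((h1 - x1) * (y1 - w1) + (h2 - x2) * (y2 - w2)) - ((k1 - x1) * (y1 - w1) + (k2 - x2) * (y2 - w2)))
   + (y1 - w1) * (((h1 - y1) * (w1 - x1) + (h2 - y2) * (w2 - x2)) - ((k1 - y1) * (w1 - x1) + (k2 - y2) * (w2 - x2))).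
  by ring.
rewrite e1 e2 f1 f2 subrr !mulr0 subrr in E1.
rewrite e1 e2 f1 f2 subrr !mulr0 addr0 in E2.
move/eqP: E1; rewrite mulf_eq0 (negbTE hD) orbF subr_eq0 => /eqP ->.
move/eqP: E2; rewrite mulf_eq0 (negbTE hD) orbF subr_eq0 => /eqP -> //.
Qed.

Definition Fc (K : conic R) (X : point R) : R :=
  ca K * X.1 ^+ 2 + cb K * X.1 * X.2 + cc K * X.2 ^+ 2 + cd K * X.1 + ce K * X.2 + cf K.

Lemma Fc_on K X : on_conic K X = (Fc K X = 0).
Proof. by []. Qed.

Lemma two_neq0 : (2 : R) != 0.
Proof. by rewrite pnatr_eq0. Qed.

Lemma OL_key (K : conic R) X Y W : ca K + cc K = 0 -> cross3 X Y W != 0 ->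
  Fc K (orthF X Y W) * cross3 X Y W =
  cross3 (orthF X Y W) Y W * Fc K X + cross3 X (orthF X Y W) W * Fc K Y
  + cross3 X Y (orthF X Y W) * Fc K W.
Proof.
case: X => x1 x2; case: Y => y1 y2; case: W => w1 w2.
case: K => a b c d e f /= hr.
rewrite /Fc /orthF /cross3 /= /dot /vsub /= => hD.
have -> : c = - a by apply/eqP; rewrite -subr_eq0 opprK addrC hr.
field => //.
Qed.

Lemma OL (K : conic R) X Y W H : ca K + cc K = 0 ->
  on_conic K X -> on_conic K Y -> on_conic K W -> cross3 X Y W != 0 ->
  is_orthocenter H X Y W -> on_conic K H.
Proof.
move=> hr hX hY hW hD hH.
rewrite (orth_uniq hH (orthF_spec hD)) //.
have := OL_key hr hD; rewrite !Fc_on in hX hY hW *.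
by rewrite hX hY hW !mulr0 !addr0 => /eqP; rewrite mulf_eq0 (negbTE hD) orbF => /eqP.
Qed.

Definition ctr X Y W H : point R :=
  ((X.1 + Y.1 + W.1 - H.1) / 2, (X.2 + Y.2 + W.2 - H.2) / 2).
Definition refl Z X : point R := (2 * Z.1 - X.1, 2 * Z.2 - X.2).

Lemma CO X Y W H : is_orthocenter H X Y W ->
  sqdist (ctr X Y W H) X = sqdist (ctr X Y W H) Y /\
  sqdist (ctr X Y W H) X = sqdist (ctr X Y W H) W.
Proof.
case: X => x1 x2; case: Y => y1 y2; case: W => w1 w2; case: H => h1 h2.
rewrite /is_orthocenter /sqdist /ctr /dot /vsub /= => [[e1 e2]].
have t2 := two_neq0.
split; apply/eqP; rewrite -subr_eq0; apply/eqP.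
  have -> : ((x1 + y1 + w1 - h1) / 2 - x1) * ((x1 + y1 + w1 - h1) / 2 - x1) +
    ((x2 + y2 + w2 - h2) / 2 - x2) * ((x2 + y2 + w2 - h2) / 2 - x2) -
    (((x1 + y1 + w1 - h1) / 2 - y1) * ((x1 + y1 + w1 - h1) / 2 - y1) +
    ((x2 + y2 + w2 - h2) / 2 - y2) * ((x2 + y2 + w2 - h2) / 2 - y2)) =
    - (((h1 - x1) * (y1 - w1) + (h2 - x2) * (y2 - w2)) +
       ((h1 - y1) * (w1 - x1) + (h2 - y2) * (w2 - x2))) by field.
  by rewrite e1 e2 addr0 oppr0.
have -> : ((x1 + y1 + w1 - h1) / 2 - x1) * ((x1 + y1 + w1 - h1) / 2 - x1) +
    ((x2 + y2 + w2 - h2) / 2 - x2) * ((x2 + y2 + w2 - h2) / 2 - x2) -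
    (((x1 + y1 + w1 - h1) / 2 - w1) * ((x1 + y1 + w1 - h1) / 2 - w1) +
    ((x2 + y2 + w2 - h2) / 2 - w2) * ((x2 + y2 + w2 - h2) / 2 - w2)) =
    - ((h1 - y1) * (w1 - x1) + (h2 - y2) * (w2 - x2)) by field.
by rewrite e2 oppr0.
Qed.

Lemma SYM (K : conic R) Z X :
  2 * ca K * Z.1 + cb K * Z.2 + cd K = 0 -> cb K * Z.1 + 2 * cc K * Z.2 + ce K = 0 ->
  on_conic K X -> on_conic K (refl Z X).
Proof.
rewrite !Fc_on => h1 h2 hX.
have -> : Fc K (refl Z X) = Fc K X + 2 * ((2 * ca K * Z.1 + cb K * Z.2 + cd K) * (Z.1 - X.1)
   + (cb K * Z.1 + 2 * cc K * Z.2 + ce K) * (Z.2 - X.2)).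
  by rewrite /Fc /refl /=; ring.
by rewrite hX h1 h2 !mul0r !add0r mulr0.
Qed.

Lemma NP (K : conic R) Z X Y W H : ca K + cc K = 0 -> (ca K != 0) || (cb K != 0) ->
  2 * ca K * Z.1 + cb K * Z.2 + cd K = 0 -> cb K * Z.1 + 2 * cc K * Z.2 + ce K = 0 ->
  on_conic K X -> on_conic K Y -> on_conic K W -> cross3 X Y W != 0 ->
  is_orthocenter H X Y W ->
  sqdist (ctr X Y W H) (refl Z H) = sqdist (ctr X Y W H) X.
Proof.
move=> hr hab hz1 hz2 hX hY hW hD hH.
rewrite (orth_uniq hH (orthF_spec hD)) //.
move: hr hab hz1 hz2 hX hY hW hD; clear hH.
case: X => x1 x2; case: Y => y1 y2; case: W => w1 w2; case: Z => z1 z2.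
case: K => a b c d e f /= hr.
have -> : c = - a by apply/eqP; rewrite -subr_eq0 opprK addrC hr.
rewrite !Fc_on /Fc /= => hab hz1 hz2 hX hY hW hD.
pose phi (v1 v2 : R) := v1 ^+ 2 - v2 ^+ 2 - 2 * z1 * v1 + 2 * z2 * v2.
pose psi (v1 v2 : R) := v1 * v2 - z2 * v1 - z1 * v2.
have L1 : a * (phi y1 y2 - phi x1 x2) + b * (psi y1 y2 - psi x1 x2) = 0.
  have -> : a * (phi y1 y2 - phi x1 x2) + b * (psi y1 y2 - psi x1 x2) =
    (a * y1 ^+ 2 + b * y1 * y2 + - a * y2 ^+ 2 + d * y1 + e * y2 + f)
    - (a * x1 ^+ 2 + b * x1 * x2 + - a * x2 ^+ 2 + d * x1 + e * x2 + f)
    - (2 * a * z1 + b * z2 + d) * (y1 - x1) - (b * z1 + 2 * - a * z2 + e) * (y2 - x2).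
    by rewrite /phi /psi; ring.
  by rewrite hY hX hz1 hz2 !mul0r !subr0.
have L2 : a * (phi w1 w2 - phi x1 x2) + b * (psi w1 w2 - psi x1 x2) = 0.
  have -> : a * (phi w1 w2 - phi x1 x2) + b * (psi w1 w2 - psi x1 x2) =
    (a * w1 ^+ 2 + b * w1 * w2 + - a * w2 ^+ 2 + d * w1 + e * w2 + f)
    - (a * x1 ^+ 2 + b * x1 * x2 + - a * x2 ^+ 2 + d * x1 + e * x2 + f)
    - (2 * a * z1 + b * z2 + d) * (w1 - x1) - (b * z1 + 2 * - a * z2 + e) * (w2 - x2).
    by rewrite /phi /psi; ring.
  by rewrite hW hX hz1 hz2 !mul0r !subr0.
set a1 := phi y1 y2 - phi x1 x2 in L1; set b1 := psi y1 y2 - psi x1 x2 in L1.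
set a2 := phi w1 w2 - phi x1 x2 in L2; set b2 := psi w1 w2 - psi x1 x2 in L2.
have hdet : a1 * b2 - a2 * b1 = 0.
  case/orP: hab => h.
    apply/eqP; rewrite -(mulIr_eq0 _ (mulIf h)) /=; apply/eqP.
    have -> : (a1 * b2 - a2 * b1) * a = b2 * (a * a1 + b * b1) - b1 * (a * a2 + b * b2) by ring.
    by rewrite L1 L2 !mulr0 subrr.
  apply/eqP; rewrite -(mulIr_eq0 _ (mulIf h)) /=; apply/eqP.
  have -> : (a1 * b2 - a2 * b1) * b = a1 * (a * a2 + b * b2) - a2 * (a * a1 + b * b1) by ring.
  by rewrite L1 L2 !mulr0 subrr.
apply/eqP; rewrite -subr_eq0; apply/eqP.
move: hD; rewrite /cross3 /= => hD.
have t2 := two_neq0.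
have -> : sqdist (ctr (x1, x2) (y1, y2) (w1, w2) (orthF (x1, x2) (y1, y2) (w1, w2)))
      (refl (z1, z2) (orthF (x1, x2) (y1, y2) (w1, w2))) -
    sqdist (ctr (x1, x2) (y1, y2) (w1, w2) (orthF (x1, x2) (y1, y2) (w1, w2))) (x1, x2)
   = 2 * (a1 * b2 - a2 * b1) / ((y1 - x1) * (w2 - x2) - (y2 - x2) * (w1 - x1)).
  rewrite /a1 /b1 /a2 /b2 /phi /psi /sqdist /ctr /refl /orthF /cross3 /= /dot /vsub /=.
  field => //.
by rewrite hdet mulr0 mul0r.
Qed.

Definition HsN1 (b1 b2 c1 c2 p1 p2 : R) : R := b1 ^+ 3 * c1 ^+ 2 * p1 * p2 - b1 ^+ 3 * c1 * c2 * p1 ^+ 2 - b1 ^+ 3 * c1 * p1 ^+ 2 * p2 + b1 ^+ 3 * c2 * p1 ^+ 3 + b1 ^+ 2 * b2 * c1 ^+ 2 * p2 ^+ 2 - 2%:R * b1 ^+ 2 * b2 * c1 * p1 * p2 ^+ 2 - b1 ^+ 2 * b2 * c2 ^+ 2 * p1 ^+ 2 + 2%:R * b1 ^+ 2 * b2 * c2 * p1 ^+ 2 * p2 - b1 ^+ 2 * c1 ^+ 3 * p1 * p2 - b1 ^+ 2 * c1 ^+ 2 * c2 * p2 ^+ 2 + 2%:R * b1 ^+ 2 * c1 * c2 * p1 ^+ 3 + b1 ^+ 2 * c1 * c2 * p1 * p2 ^+ 2 + b1 ^+ 2 * c1 * p1 ^+ 3 * p2 + b1 ^+ 2 * c1 *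 p1 * p2 ^+ 3 + b1 ^+ 2 * c2 ^+ 2 * p1 ^+ 2 * p2 - 2%:R * b1 ^+ 2 * c2 * p1 ^+ 4 - 2%:R * b1 ^+ 2 * c2 * p1 ^+ 2 * p2 ^+ 2 + b1 * b2 ^+ 2 * c1 * c2 * p2 ^+ 2 - b1 * b2 ^+ 2 * c1 * p2 ^+ 3 - b1 * b2 ^+ 2 * c2 ^+ 2 * p1 * p2 + b1 * b2 ^+ 2 * c2 * p1 * p2 ^+ 2 + b1 * b2 * c1 ^+ 3 * p1 ^+ 2 - 2%:R * b1 * b2 * c1 ^+ 2 * p1 ^+ 3 - b1 * b2 * c1 ^+ 2 * p1 * p2 ^+ 2 - b1 * b2 * c1 * c2 ^+ 2 * p2 ^+ 2 + b1 * b2 * c1 * p1 ^+ 4 + 2%:R * b1 * b2 * c1 * p1 ^+ 2 * p2 ^+ 2 + b1 * b2 * c1 * p2 ^+ 4 + b1 * b2 * c2 ^+ 2 * p1 ^+ 3 + 2%:R * b1 * b2 * c2 ^+ 2 * p1 * p2 ^+ 2 - 2%:R * b1 * b2 * c2 * p1 ^+ 3 * p2 - 2%:R * b1 * b2 * c2 * p1 * p2 ^+ 3 + b1 * c1 ^+ 3 * p1 ^+ 2 * p2 + 2%:R * b1 * c1 ^+ 2 * c2 * p1 * p2 ^+ 2 - b1 * c1 ^+ 2 * p1 ^+ 3 * p2 - b1 * c1 ^+ 2 * p1 * p2 ^+ 3 + b1 * c1 * c2 ^+ 2 * p2 ^+ 3 - b1 * c1 * c2 * p1 ^+ 4 - 2%:R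 * b1 * c1 * c2 * p1 ^+ 2 * p2 ^+ 2 - b1 * c1 * c2 * p2 ^+ 4 - b1 * c2 ^+ 2 * p1 ^+ 3 * p2 - b1 * c2 ^+ 2 * p1 * p2 ^+ 3 + b1 * c2 * p1 ^+ 5 + 2%:R * b1 * c2 * p1 ^+ 3 * p2 ^+ 2 + b1 * c2 * p1 * p2 ^+ 4 + b2 ^+ 2 * c1 ^+ 2 * c2 * p1 ^+ 2 - b2 ^+ 2 * c1 ^+ 2 * p1 ^+ 2 * p2 + b2 ^+ 2 * c1 * c2 ^+ 2 * p1 * p2 - b2 ^+ 2 * c1 * c2 * p1 ^+ 3 - 2%:R * b2 ^+ 2 * c1 * c2 * p1 * p2 ^+ 2 + b2 ^+ 2 * c1 * p1 ^+ 3 * p2 + b2 ^+ 2 * c1 * p1 * p2 ^+ 3 - b2 * c1 ^+ 3 * p1 ^+ 3 - 2%:R * b2 * c1 ^+ 2 * c2 * p1 ^+ 2 * p2 + 2%:R * b2 * c1 ^+ 2 * p1 ^+ 4 + 2%:R * b2 * c1 ^+ 2 * p1 ^+ 2 * p2 ^+ 2 - b2 * c1 * c2 ^+ 2 * p1 * p2 ^+ 2 + 2%:R * b2 * c1 * c2 * p1 ^+ 3 * p2 + 2%:R * b2 * c1 * c2 * p1 * p2 ^+ 3 - b2 * c1 * p1 ^+ 5 - 2%:R * b2 * c1 * p1 ^+ 3 * p2 ^+ 2 - b2 * c1 * p1 * p2 ^+ 4.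
Definition HsN2 (b1 b2 c1 c2 p1 p2 : R) : R := b1 ^+ 2 * b2 * c1 ^+ 2 * p1 * p2 - b1 ^+ 2 * b2 * c1 * c2 * p1 ^+ 2 - b1 ^+ 2 * b2 * c1 * p1 ^+ 2 * p2 + b1 ^+ 2 * b2 * c2 * p1 ^+ 3 - b1 ^+ 2 * c1 ^+ 2 * c2 * p1 * p2 - b1 ^+ 2 * c1 * c2 ^+ 2 * p2 ^+ 2 + 2%:R * b1 ^+ 2 * c1 * c2 * p1 ^+ 2 * p2 + b1 ^+ 2 * c1 * c2 * p2 ^+ 3 + b1 ^+ 2 * c2 ^+ 2 * p1 * p2 ^+ 2 - b1 ^+ 2 * c2 * p1 ^+ 3 * p2 - b1 ^+ 2 * c2 * p1 * p2 ^+ 3 + b1 * b2 ^+ 2 * c1 ^+ 2 * p2 ^+ 2 - 2%:R * b1 * b2 ^+ 2 * c1 * p1 * p2 ^+ 2 - b1 * b2 ^+ 2 * c2 ^+ 2 * p1 ^+ 2 + 2%:R * b1 * b2 ^+ 2 * c2 * p1 ^+ 2 * p2 + b1 * b2 * c1 ^+ 2 * c2 * p1 ^+ 2 - 2%:R * b1 * b2 * c1 ^+ 2 * p1 ^+ 2 * p2 - b1 * b2 * c1 ^+ 2 * p2 ^+ 3 + 2%:R * b1 * b2 * c1 * p1 ^+ 3 * p2 + 2%:R * b1 * b2 * c1 * p1 * p2 ^+ 3 - b1 * b2 * c2 ^+ 3 * p2 ^+ 2 + b1 * b2 * c2 ^+ 2 * p1 ^+ 2 * p2 + 2%:R * b1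 * b2 * c2 ^+ 2 * p2 ^+ 3 - b1 * b2 * c2 * p1 ^+ 4 - 2%:R * b1 * b2 * c2 * p1 ^+ 2 * p2 ^+ 2 - b1 * b2 * c2 * p2 ^+ 4 + b1 * c1 ^+ 2 * c2 * p1 ^+ 2 * p2 + 2%:R * b1 * c1 * c2 ^+ 2 * p1 * p2 ^+ 2 - 2%:R * b1 * c1 * c2 * p1 ^+ 3 * p2 - 2%:R * b1 * c1 * c2 * p1 * p2 ^+ 3 + b1 * c2 ^+ 3 * p2 ^+ 3 - 2%:R * b1 * c2 ^+ 2 * p1 ^+ 2 * p2 ^+ 2 - 2%:R * b1 * c2 ^+ 2 * p2 ^+ 4 + b1 * c2 * p1 ^+ 4 * p2 + 2%:R * b1 * c2 * p1 ^+ 2 * p2 ^+ 3 + b1 * c2 * p2 ^+ 5 + b2 ^+ 3 * c1 * c2 * p2 ^+ 2 - b2 ^+ 3 * c1 * p2 ^+ 3 - b2 ^+ 3 * c2 ^+ 2 * p1 * p2 + b2 ^+ 3 * c2 * p1 * p2 ^+ 2 - b2 ^+ 2 * c1 ^+ 2 * p1 * p2 ^+ 2 + b2 ^+ 2 * c1 * c2 ^+ 2 * p1 ^+ 2 - b2 ^+ 2 * c1 * c2 * p1 ^+ 2 * p2 - 2%:R * b2 ^+ 2 * c1 * c2 * p2 ^+ 3 + 2%:R * b2 ^+ 2 * c1 * p1 ^+ 2 * p2 ^+ 2 + 2%:R * b2 ^+ 2 * c1 * p2 ^+ 4 + b2 ^+ 2 * c2 ^+ 3 * p1 * p2 - b2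 ^+ 2 * c2 * p1 ^+ 3 * p2 - b2 ^+ 2 * c2 * p1 * p2 ^+ 3 - b2 * c1 ^+ 2 * c2 * p1 ^+ 3 + b2 * c1 ^+ 2 * p1 ^+ 3 * p2 + b2 * c1 ^+ 2 * p1 * p2 ^+ 3 - 2%:R * b2 * c1 * c2 ^+ 2 * p1 ^+ 2 * p2 + b2 * c1 * c2 * p1 ^+ 4 + 2%:R * b2 * c1 * c2 * p1 ^+ 2 * p2 ^+ 2 + b2 * c1 * c2 * p2 ^+ 4 - b2 * c1 * p1 ^+ 4 * p2 - 2%:R * b2 * c1 * p1 ^+ 2 * p2 ^+ 3 - b2 * c1 * p2 ^+ 5 - b2 * c2 ^+ 3 * p1 * p2 ^+ 2 + b2 * c2 ^+ 2 * p1 ^+ 3 * p2 + b2 * c2 ^+ 2 * p1 * p2 ^+ 3.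
Definition O0 : point R := (0, 0).
Definition Hs (B C P : point R) : point R :=
  let D := cross3 C P O0 * cross3 P O0 B * cross3 B P C in
  (HsN1 B.1 B.2 C.1 C.2 P.1 P.2 / D, HsN2 B.1 B.2 C.1 C.2 P.1 P.2 / D).

Lemma Hs_orthA (B C P : point R) : cross3 C P O0 != 0 -> cross3 P O0 B != 0 -> cross3 B P C != 0 ->
  is_orthocenter (Hs B C P) O0 (orthF C P O0) (orthF P O0 B).
Proof.
case: B => b1 b2; case: C => c1 c2; case: P => p1 p2.
rewrite /Hs /O0 /orthF /is_orthocenter /cross3 /= /HsN1 /HsN2 /dot /vsub /= => h1 h2 h3.
rewrite !sub0r in h1 h2.
split; field.
all: by rewrite ?h1 ?h2 ?h3.
Qed.

Lemma Hs_orthB (B C P : point R) : cross3 C P O0 != 0 -> cross3 P O0 B != 0 -> cross3 B P C != 0 ->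
  is_orthocenter (Hs B C P) B (orthF P O0 B) (orthF B P C).
Proof.
case: B => b1 b2; case: C => c1 c2; case: P => p1 p2.
rewrite /Hs /O0 /orthF /is_orthocenter /cross3 /= /HsN1 /HsN2 /dot /vsub /= => h1 h2 h3.
rewrite !sub0r in h1 h2.
split; field.
all: by rewrite ?h1 ?h2 ?h3.
Qed.

Lemma Hs_orthC (B C P : point R) : cross3 C P O0 != 0 -> cross3 P O0 B != 0 -> cross3 B P C != 0 ->
  is_orthocenter (Hs B C P) C (orthF B P C) (orthF C P O0).
Proof.
case: B => b1 b2; case: C => c1 c2; case: P => p1 p2.
rewrite /Hs /O0 /orthF /is_orthocenter /cross3 /= /HsN1 /HsN2 /dot /vsub /= => h1 h2 h3.
rewrite !sub0r in h1 h2.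
split; field.
all: by rewrite ?h1 ?h2 ?h3.
Qed.


Definition m3 (a b c d e f g h i : R) := a * (e * i - f * h) - b * (d * i - f * g) + c * (d * h - e * g).

Lemma prop_gen (r11 r12 r13 r14 r21 r22 r23 r24 r31 r32 r33 r34 k1 k2 k3 k4 : R) :
  r11 * k1 + r12 * k2 + r13 * k3 + r14 * k4 = 0 ->
  r21 * k1 + r22 * k2 + r23 * k3 + r24 * k4 = 0 ->
  r31 * k1 + r32 * k2 + r33 * k3 + r34 * k4 = 0 ->
  let G1 := m3 r12 r13 r14 r22 r23 r24 r32 r33 r34 in
  let G2 := - m3 r11 r13 r14 r21 r23 r24 r31 r33 r34 in
  let G3 := m3 r11 r12 r14 r21 r22 r24 r31 r32 r34 in
  let G4 := - m3 r11 r12 r13 r21 r22 r23 r31 r32 r33 in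
  [/\ G1 * k2 - k1 * G2 = 0, G1 * k3 - k1 * G3 = 0 & G1 * k4 - k1 * G4 = 0] /\
  [/\ G2 * k1 - k2 * G1 = 0, G2 * k3 - k2 * G3 = 0 & G2 * k4 - k2 * G4 = 0].
Proof.
set s1 := r11 * k1 + _ + _ + _; set s2 := r21 * k1 + _ + _ + _; set s3 := r31 * k1 + _ + _ + _.
move=> h1 h2 h3 G1 G2 G3 G4.
  have e01 : G1 * k2 - k1 * G2 = (r23 * r34 - r24 * r33) * s1 + (- r13 * r34 + r14 * r33) * s2 + (r13 * r24 - r14 * r23) * s3 by rewrite /G1 /G2 /G3 /G4 /s1 /s2 /s3 /m3; ring.
  have e02 : G1 * k3 - k1 * G3 = (- r22 * r34 + r24 * r32) * s1 + (r12 * r34 - r14 * r32) * s2 + (- r12 * r24 + r14 * r22) * s3 by rewrite /G1 /G2 /G3 /G4 /s1 /s2 /s3 /m3; ring.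
  have e03 : G1 * k4 - k1 * G4 = (r22 * r33 - r23 * r32) * s1 + (- r12 * r33 + r13 * r32) * s2 + (r12 * r23 - r13 * r22) * s3 by rewrite /G1 /G2 /G3 /G4 /s1 /s2 /s3 /m3; ring.
  have e10 : G2 * k1 - k2 * G1 = (- r23 * r34 + r24 * r33) * s1 + (r13 * r34 - r14 * r33) * s2 + (- r13 * r24 + r14 * r23) * s3 by rewrite /G1 /G2 /G3 /G4 /s1 /s2 /s3 /m3; ring.
  have e12 : G2 * k3 - k2 * G3 = (r21 * r34 - r24 * r31) * s1 + (- r11 * r34 + r14 * r31) * s2 + (r11 * r24 - r14 * r21) * s3 by rewrite /G1 /G2 /G3 /G4 /s1 /s2 /s3 /m3; ring.
  have e13 : G2 * k4 - k2 * G4 = (- r21 * r33 + r23 * r31) * s1 + (r11 * r33 - r13 * r31) * s2 + (- r11 * r23 + r13 * r21) * s3 by rewrite /G1 /G2 /G3 /G4 /s1 /s2 /s3 /m3; ring.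
  by rewrite e01 e02 e03 e10 e12 e13 h1 h2 h3 !mulr0 !addr0.
Qed.

Lemma circ_from X Y W H Q : is_orthocenter H X Y W ->
  sqdist (ctr X Y W H) Q = sqdist (ctr X Y W H) X -> on_circumcircle X Y W Q.
Proof.
move=> hH hQ; have [h1 h2] := CO hH; exists (ctr X Y W H).
split; [exact h1 | split; [exact h2 | by rewrite hQ]].
Qed.

Lemma circ_vert X Y W : cross3 X Y W != 0 ->
  [/\ on_circumcircle X Y W X, on_circumcircle X Y W Y & on_circumcircle X Y W W].
Proof.
move=> hD; have [h1 h2] := CO (orthF_spec hD).
by split; exists (ctr X Y W (orthF X Y W)).
Qed.

Lemma sqr_sum_neq0 (x y : R) : (x != 0) || (y != 0) -> 4 * x ^+ 2 + y ^+ 2 != 0.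
Proof.
move=> h.
have hx : 0 <= 4 * x ^+ 2 by rewrite mulr_ge0 ?ler0n ?sqr_ge0.
have hy : 0 <= y ^+ 2 by rewrite sqr_ge0.
by rewrite paddr_eq0 // mulf_eq0 pnatr_eq0 /= !sqrf_eq0 negb_and.
Qed.

Lemma main0 (b1 b2 c1 c2 p1 p2 : R) (HA HB HC : point R) :
  let B := (b1, b2) in let C := (c1, c2) in let P := (p1, p2) in
  nondeg_triangle O0 B C ->
  nondeg_triangle B P C -> nondeg_triangle C P O0 -> nondeg_triangle P O0 B ->
  is_orthocenter HA B P C -> is_orthocenter HB C P O0 -> is_orthocenter HC P O0 B ->
  nondeg_triangle O0 HB HC -> nondeg_triangle B HC HA -> nondeg_triangle C HA HB ->
  exists Q : point R,
    [/\ on_circumcircle O0 HB HC Q, on_circumcircle B HC HA Q,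
        on_circumcircle C HA HB Q &
        forall K : conic R, rect_hyperbola K ->
          on_conic K O0 -> on_conic K B -> on_conic K C -> on_conic K P ->
          on_conic K Q].
Proof.
move=> B C P; rewrite /nondeg_triangle => hABC hBPC hCPA hPAB oA oB oC nA nB nC.
have eA := orth_uniq oA (orthF_spec hBPC) hBPC.
have eB := orth_uniq oB (orthF_spec hCPA) hCPA.
have eC := orth_uniq oC (orthF_spec hPAB) hPAB.
pose a0 := m3 (b1 * b2) b1 b2 (c1 * c2) c1 c2 (p1 * p2) p1 p2.
pose b0 := - m3 (b1 ^+ 2 - b2 ^+ 2) b1 b2 (c1 ^+ 2 - c2 ^+ 2) c1 c2 (p1 ^+ 2 - p2 ^+ 2) p1 p2.
pose d0 := m3 (b1 ^+ 2 - b2 ^+ 2) (b1 * b2) b2 (c1 ^+ 2 - c2 ^+ 2) (c1 * c2) c2 (p1 ^+ 2 - p2 ^+ 2) (p1 * p2) p2.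
pose e0 := - m3 (b1 ^+ 2 - b2 ^+ 2) (b1 * b2) b1 (c1 ^+ 2 - c2 ^+ 2) (c1 * c2) c1 (p1 ^+ 2 - p2 ^+ 2) (p1 * p2) p1.
pose K0 := Conic a0 b0 (- a0) d0 e0 0.
have K0r : ca K0 + cc K0 = 0 by rewrite /= subrr.
have K0A : on_conic K0 O0 by rewrite /on_conic /O0 /=; ring.
have K0B : on_conic K0 B by rewrite /on_conic /= /a0 /b0 /d0 /e0 /m3; ring.
have K0C : on_conic K0 C by rewrite /on_conic /= /a0 /b0 /d0 /e0 /m3; ring.
have K0P : on_conic K0 P by rewrite /on_conic /= /a0 /b0 /d0 /e0 /m3; ring.
have K0HA := OL K0r K0B K0P K0C hBPC oA.
have K0HB := OL K0r K0C K0P K0A hCPA oB.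
have K0HC := OL K0r K0P K0A K0B hPAB oC.
case: (boolP ((a0 != 0) || (b0 != 0))) => hab; last first.
  move: hab; rewrite negb_or !negbK => /andP [/eqP ha /eqP hb].
  have hBC : b1 * c2 - b2 * c1 != 0.
    by move: hABC; rewrite /cross3 /O0 /= !subr0.
  have hBP : b1 * p2 - b2 * p1 != 0.
    have -> : b1 * p2 - b2 * p1 = cross3 P O0 B by rewrite /cross3 /O0 /=; ring.
    exact: hPAB.
  have hCP : c1 * p2 - c2 * p1 != 0.
    have -> : c1 * p2 - c2 * p1 = cross3 C P O0 by rewrite /cross3 /O0 /=; ring.
    exact: hCPA.
  have dB : (p1 - c1) * b1 + (p2 - c2) * b2 = 0.
    have E : (b1 * p2 - b2 * p1) * ((p1 - c1) * b1 + (p2 - c2) * b2) * (b1 * c2 - b2 * c1)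
       = (b1 ^+ 2 - b2 ^+ 2) * a0 - (- (b1 * b2)) * b0 by rewrite /a0 /b0 /m3; ring.
    move: E; rewrite ha hb !mulr0 subrr => /eqP.
    by rewrite !mulf_eq0 (negbTE hBC) (negbTE hBP) /= orbF => /eqP.
  have dC : (p1 - b1) * c1 + (p2 - b2) * c2 = 0.
    have E : (c1 * p2 - c2 * p1) * ((p1 - b1) * c1 + (p2 - b2) * c2) * (b1 * c2 - b2 * c1)
       = (c1 ^+ 2 - c2 ^+ 2) * a0 - (- (c1 * c2)) * b0 by rewrite /a0 /b0 /m3; ring.
    move: E; rewrite ha hb !mulr0 subrr => /eqP.
    by rewrite !mulf_eq0 (negbTE hBC) (negbTE hCP) /= orbF => /eqP.
  have oA' : is_orthocenter O0 B P C.
    rewrite /is_orthocenter /dot /vsub /O0 /=; split.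
      apply: (@eq_trans _ _ (- ((p1 - c1) * b1 + (p2 - c2) * b2))); [ring | by rewrite dB oppr0].
    apply: (@eq_trans _ _ (((p1 - c1) * b1 + (p2 - c2) * b2) - ((p1 - b1) * c1 + (p2 - b2) * c2))); [ring | by rewrite dB dC subrr].
  have oB' : is_orthocenter B C P O0.
    rewrite /is_orthocenter /dot /vsub /O0 /=; split.
      apply: (@eq_trans _ _ (((p1 - c1) * b1 + (p2 - c2) * b2) - ((p1 - b1) * c1 + (p2 - b2) * c2))); [ring | by rewrite dB dC subrr].
    apply: (@eq_trans _ _ (((p1 - b1) * c1 + (p2 - b2) * c2))); [ring | by rewrite dC].
  have oC' : is_orthocenter C P O0 B.
    rewrite /is_orthocenter /dot /vsub /O0 /=; split.
      apply: (@eq_trans _ _ (((p1 - c1) * b1 + (p2 - c2) * b2))); [ring | by rewrite dB].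
    apply: (@eq_trans _ _ (- ((p1 - b1) * c1 + (p2 - b2) * c2))); [ring | by rewrite dC oppr0].
  rewrite (orth_uniq oA oA' hBPC) (orth_uniq oB oB' hCPA) (orth_uniq oC oC' hPAB) in nA nB nC *.
  exists O0; split.
  - by case: (circ_vert nA).
  - by case: (circ_vert nB).
  - by case: (circ_vert nC).
  - by move=> K _ kA.
have hrho := sqr_sum_neq0 hab.
pose rho := 4 * a0 ^+ 2 + b0 ^+ 2.
pose Z : point R := (- (2 * a0 * d0 + b0 * e0) / rho, - (b0 * d0 - 2 * a0 * e0) / rho).
have z1 : 2 * ca K0 * Z.1 + cb K0 * Z.2 + cd K0 = 0.
  rewrite /= /Z /rho /=; field; exact: hrho.
have z2 : cb K0 * Z.1 + 2 * cc K0 * Z.2 + ce K0 = 0.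
  rewrite /= /Z /rho /=; field; exact: hrho.
have hsA : is_orthocenter (Hs B C P) O0 HB HC by rewrite eB eC; exact: Hs_orthA.
have hsB : is_orthocenter (Hs B C P) B HC HA by rewrite eC eA; exact: Hs_orthB.
have hsC : is_orthocenter (Hs B C P) C HA HB by rewrite eA eB; exact: Hs_orthC.
exists (refl Z (Hs B C P)); split.
- exact: (circ_from hsA (NP K0r hab z1 z2 K0A K0HB K0HC nA hsA)).
- exact: (circ_from hsB (NP K0r hab z1 z2 K0B K0HC K0HA nB hsB)).
- exact: (circ_from hsC (NP K0r hab z1 z2 K0C K0HA K0HB nC hsC)).
move=> K [hr _] kA kB kC kP.
have hc : cc K = - ca K by apply/eqP; rewrite -subr_eq0 opprK addrC hr.
have hf : cf K = 0 by move: kA; rewrite /on_conic /O0 /= => kA; rewrite -kA; ring.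
have sB : (b1 ^+ 2 - b2 ^+ 2) * ca K + (b1 * b2) * cb K + b1 * cd K + b2 * ce K = 0.
  by move: kB; rewrite /on_conic hc hf /= => kB; rewrite -kB; ring.
have sC : (c1 ^+ 2 - c2 ^+ 2) * ca K + (c1 * c2) * cb K + c1 * cd K + c2 * ce K = 0.
  by move: kC; rewrite /on_conic hc hf /= => kC; rewrite -kC; ring.
have sP : (p1 ^+ 2 - p2 ^+ 2) * ca K + (p1 * p2) * cb K + p1 * cd K + p2 * ce K = 0.
  by move: kP; rewrite /on_conic hc hf /= => kP; rewrite -kP; ring.
have [[e01 e02 e03] [e10 e12 e13]] := prop_gen sB sC sP.
rewrite -/a0 -/b0 -/d0 -/e0 in e01 e02 e03 e10 e12 e13.
move: z1 z2; rewrite /= => z1 z2.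
have zK1 : 2 * ca K * Z.1 + cb K * Z.2 + cd K = 0.
  case/orP: hab => h.
    apply: (mulfI h); rewrite mulr0.
    have -> : a0 * (2 * ca K * Z.1 + cb K * Z.2 + cd K) =
      ca K * (2 * a0 * Z.1 + b0 * Z.2 + d0) + Z.2 * (a0 * cb K - ca K * b0)
      + (a0 * cd K - ca K * d0) by ring.
    by rewrite z1 e01 e02 !mulr0 !addr0.
  apply: (mulfI h); rewrite mulr0.
  have -> : b0 * (2 * ca K * Z.1 + cb K * Z.2 + cd K) =
    2 * Z.1 * (b0 * ca K - cb K * a0) + cb K * (2 * a0 * Z.1 + b0 * Z.2 + d0)
    + (b0 * cd K - cb K * d0) by ring.
  by rewrite z1 e10 e12 !mulr0 !addr0.
have zK2 : cb K * Z.1 + 2 * cc K * Z.2 + ce K = 0.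
  rewrite hc; case/orP: hab => h.
    apply: (mulfI h); rewrite mulr0.
    have -> : a0 * (cb K * Z.1 + 2 * - ca K * Z.2 + ce K) =
      ca K * (b0 * Z.1 + 2 * - a0 * Z.2 + e0) + Z.1 * (a0 * cb K - ca K * b0)
      + (a0 * ce K - ca K * e0) by ring.
    by rewrite z2 e01 e03 !mulr0 !addr0.
  apply: (mulfI h); rewrite mulr0.
  have -> : b0 * (cb K * Z.1 + 2 * - ca K * Z.2 + ce K) =
    cb K * (b0 * Z.1 + 2 * - a0 * Z.2 + e0) - 2 * Z.2 * (b0 * ca K - cb K * a0)
    + (b0 * ce K - cb K * e0) by ring.
  by rewrite z2 e10 e13 !mulr0 subrr addr0.
have KHB := OL hr kC kP kA hCPA oB.
have KHC := OL hr kP kA kB hPAB oC.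
have KHs := OL hr kA KHB KHC nA hsA.
exact: SYM zK1 zK2 KHs.
Qed.

Definition tr (A X : point R) : point R := (X.1 - A.1, X.2 - A.2).

Lemma tr_self A : tr A A = O0.
Proof. by rewrite /tr /O0 !subrr. Qed.

Lemma nondeg_tr A X Y W : nondeg_triangle X Y W -> nondeg_triangle (tr A X) (tr A Y) (tr A W).
Proof.
rewrite /nondeg_triangle.
have -> : cross3 (tr A X) (tr A Y) (tr A W) = cross3 X Y W by rewrite /cross3 /tr /=; ring.
by [].
Qed.

Lemma orth_tr A H X Y W : is_orthocenter H X Y W -> is_orthocenter (tr A H) (tr A X) (tr A Y) (tr A W).
Proof.
rewrite /is_orthocenter /dot /vsub /tr /= => [[h1 h2]]; split; [rewrite -h1 | rewrite -h2]; ring.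
Qed.

Lemma circ_tr A X Y W Q : on_circumcircle (tr A X) (tr A Y) (tr A W) (tr A Q) -> on_circumcircle X Y W Q.
Proof.
case=> O [h1 [h2 h3]]; exists (O.1 + A.1, O.2 + A.2).
have E U : sqdist (O.1 + A.1, O.2 + A.2) U = sqdist O (tr A U).
  by rewrite /sqdist /dot /vsub /tr /=; ring.
by rewrite !E.
Qed.

Definition Ktr (A : point R) (K : conic R) : conic R :=
  Conic (ca K) (cb K) (cc K) (2 * ca K * A.1 + cb K * A.2 + cd K)
    (cb K * A.1 + 2 * cc K * A.2 + ce K) (Fc K A).

Lemma conic_tr A K X : on_conic (Ktr A K) (tr A X) = on_conic K X.
Proof.
rewrite !Fc_on.
have -> : Fc (Ktr A K) (tr A X) = Fc K X.
  rewrite /Fc /Ktr /tr /= -/(Fc K A) /Fc.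
  ring.
by [].
Qed.

Lemma rect_tr A K : rect_hyperbola K -> rect_hyperbola (Ktr A K).
Proof.
case=> h1 h2; split => //.
have -> : conic_det (Ktr A K) = conic_det K by rewrite /conic_det /Ktr /Fc /=; ring.
by [].
Qed.
End S.

Unset Implicit Arguments.

Theorem corollary2p3 (R : realFieldType) (A B C P HA HB HC : point R) :
  nondeg_triangle A B C ->
  nondeg_triangle B P C -> nondeg_triangle C P A -> nondeg_triangle P A B ->
  is_orthocenter HA B P C -> is_orthocenter HB C P A -> is_orthocenter HC P A B ->
  nondeg_triangle A HB HC -> nondeg_triangle B HC HA -> nondeg_triangle C HA HB ->
  exists Q : point R,
    [/\ on_circumcircle A HB HC Q, on_circumcircle B HC HA Q,
        on_circumcircle C HA HB Q &
        forall K : conic R, rect_hyperbola K ->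
          on_conic K A -> on_conic K B -> on_conic K C -> on_conic K P ->
          on_conic K Q].
Proof.
move=> hABC hBPC hCPA hPAB oA oB oC nA nB nC.
have eAA := tr_self A.
have t1 := nondeg_tr A hABC; have t2 := nondeg_tr A hBPC.
have t3 := nondeg_tr A hCPA; have t4 := nondeg_tr A hPAB.
have u1 := orth_tr A oA; have u2 := orth_tr A oB; have u3 := orth_tr A oC.
have v1 := nondeg_tr A nA; have v2 := nondeg_tr A nB; have v3 := nondeg_tr A nC.
rewrite eAA in t1 t3 t4 u2 u3 v1.
have [Q' [c1 c2 c3 hK]] := main0 t1 t2 t3 t4 u1 u2 u3 v1 v2 v3.
exists (Q'.1 + A.1, Q'.2 + A.2).
have eQ : tr A (Q'.1 + A.1, Q'.2 + A.2) = Q' by rewrite /tr /= !addrK; case: (Q').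
split.
- by apply: (circ_tr (A := A)); rewrite eQ eAA.
- by apply: (circ_tr (A := A)); rewrite eQ.
- by apply: (circ_tr (A := A)); rewrite eQ.
move=> K hr kA kB kC kP.
rewrite -(conic_tr A) eQ; apply: hK.
- exact: rect_tr.
- by rewrite -eAA conic_tr.
- by rewrite (conic_tr A K B).
- by rewrite (conic_tr A K C).
- by rewrite (conic_tr A K P).
Qed.
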